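(* Let $K\ge 2$, let $\pi_1,\dots,\pi_K>0$ with $\sum_k\pi_k=1$, and let $\mu_1,\dots,\mu_K$ be pairwise distinct reals. For $\epsilon\in[0,1-\max_k\pi_k]$ let $f(\epsilon)$ be the supremum of $$\sum_{k'=1}^K\tilde\pi_{k'}\tilde\mu_{k'}^2$$ over all matrices $(\pi_{kk'})_{k,k'=1}^K$ with $\pi_{kk'}\ge 0$, $\sum_{k'}\pi_{kk'}=\pi_k$ for all $k$, and $1-\sum_{k'}\max_k\pi_{kk'}\ge\epsilon$, where $\tilde\pi_{k'}=\sum_k\pi_{kk'}$, $\tilde\mu_{k'}=\sum_k\pi_{kk'}\mu_k/\tilde\pi_{k'}$, and terms with $\tilde\pi_{k'}=0$ are taken to be $0$. Then $f$ is non-increasing on $[0,1-\max_k\pi_k]$, $f(0)=\sum_k\pi_k\mu_k^2$, and $f(\epsilon)<f(0)$ for every $\epsilon\in(0,1-\max_k\pi_k]$.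
   Context: Here $\pi_{kk'}$ plays the role of the proportion of samples lying both in the $k$-th true cluster and the $k'$-th estimated cluster, and $1-\sum_{k'}\max_k\pi_{kk'}$ is the corresponding error clustering rate. *)

(* Defs.v *)
From Stdlib Require Import Reals Lra ClassicalEpsilon.
Open Scope R_scope.

Fixpoint rsum (n : nat) (f : nat -> R) : R :=
  match n with O => 0 | S m => rsum m f + f m end.

(* rmax n f = max(0, f 0, ..., f (n-1)); used only on nonnegative families *)
Fixpoint rmax (n : nat) (f : nat -> R) : R :=
  match n with O => 0 | S m => Rmax (rmax m f) (f m) end.

Definition Rsup (E : R -> Prop) : R :=
  epsilon (inhabits 0) (fun l => is_lub E l).

(* feasible joint matrices (pi_{kk'}), indices k,k' in {0..K-1} *)
Definition feasible (K : nat) (pi : nat -> R) (eps : R) (P : nat -> nat -> R) : Prop :=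
  (forall k k', (k < K)%nat -> (k' < K)%nat -> 0 <= P k k') /\
  (forall k, (k < K)%nat -> rsum K (fun k' => P k k') = pi k) /\
  1 - rsum K (fun k' => rmax K (fun k => P k k')) >= eps.

Definition pit (K : nat) (P : nat -> nat -> R) (k' : nat) : R :=
  rsum K (fun k => P k k').

Definition mut (K : nat) (mu : nat -> R) (P : nat -> nat -> R) (k' : nat) : R :=
  rsum K (fun k => P k k' * mu k) / pit K P k'.

Definition objective (K : nat) (mu : nat -> R) (P : nat -> nat -> R) : R :=
  rsum K (fun k' => if Req_EM_T (pit K P k') 0 then 0
                    else pit K P k' * (mut K mu P k') ^ 2).

Definition fval (K : nat) (pi mu : nat -> R) (eps : R) : R :=
  Rsup (fun v => exists P, feasible K pi eps P /\ v = objective K mu P).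

(* Main.v *)
Require Import Defs.
From Stdlib Require Import Reals Lra Lia ClassicalEpsilon Classical Arith.
Open Scope R_scope.

Lemma rsum_ext n f g : (forall k, (k<n)%nat -> f k = g k) -> rsum n f = rsum n g.
Proof. induction n; simpl; intros H; auto. rewrite IHn by (intros; apply H; lia). rewrite H by lia. auto. Qed.

Lemma rsum_le n f g : (forall k, (k<n)%nat -> f k <= g k) -> rsum n f <= rsum n g.
Proof. induction n; simpl; intros H; [lra|]. assert (H1 := H n (Nat.lt_succ_diag_r n)).
assert (rsum n f <= rsum n g) by (apply IHn; intros; apply H; lia). lra. Qed.

Lemma rsum_plus n f g : rsum n (fun k => f k + g k) = rsum n f + rsum n g.
Proof. induction n; simpl; lra. Qed.
Lemma rsum_minus n f g : rsum n (fun k => f k - g k) = rsum n f - rsum n g.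
Proof. induction n; simpl; lra. Qed.
Lemma rsum_scal n a f : rsum n (fun k => a * f k) = a * rsum n f.
Proof. induction n; simpl; [ring|rewrite IHn; ring]. Qed.
Lemma rsum_scalr n a f : rsum n (fun k => f k * a) = rsum n f * a.
Proof. induction n; simpl; [ring|rewrite IHn; ring]. Qed.
Lemma rsum_const n a : rsum n (fun _ => a) = INR n * a.
Proof. induction n; simpl rsum; [simpl; ring|]. rewrite IHn, S_INR; ring. Qed.
Lemma rsum_swap n m f : rsum n (fun i => rsum m (fun j => f i j)) = rsum m (fun j => rsum n (fun i => f i j)).
Proof. induction n; simpl.
- rewrite rsum_const. simpl. ring.
- rewrite IHn. rewrite <- rsum_plus. reflexivity. Qed.

Lemma rsum_ind n j a : (j < n)%nat -> rsum n (fun k => if Nat.eq_dec k j then a else 0) = a.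
Proof. induction n; intros H; [lia|]. simpl. destruct (Nat.eq_dec n j).
- subst. rewrite (rsum_ext _ _ (fun _ => 0)). rewrite rsum_const.
  destruct (Nat.eq_dec j j); [ring|lia].
  intros k Hk. destruct (Nat.eq_dec k j); [lia|auto].
- rewrite IHn by lia. ring. Qed.

Lemma rsum_ind2 n j a : (j < n)%nat -> rsum n (fun k => if Nat.eq_dec j k then a else 0) = a.
Proof. intros H. transitivity (rsum n (fun k => if Nat.eq_dec k j then a else 0)).
apply rsum_ext. intros k _.
destruct (Nat.eq_dec j k), (Nat.eq_dec k j); auto; exfalso; lia. apply rsum_ind; auto. Qed.

Lemma rsum_nonneg n f : (forall i, (i<n)%nat -> 0 <= f i) -> 0 <= rsum n f.
Proof. intros H. apply Rle_trans with (rsum n (fun _ => 0)).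
rewrite rsum_const; lra. apply rsum_le; auto. Qed.

Lemma rmax_ge0 n f : 0 <= rmax n f.
Proof. induction n; simpl; [lra| eapply Rle_trans; [apply IHn|apply Rmax_l]]. Qed.
Lemma rmax_ub n f k : (k<n)%nat -> f k <= rmax n f.
Proof. induction n; intros H; [lia|simpl]. destruct (Nat.eq_dec k n).
subst; apply Rmax_r. eapply Rle_trans; [apply IHn; lia | apply Rmax_l]. Qed.
Lemma rmax_lub n f b : 0 <= b -> (forall k, (k<n)%nat -> f k <= b) -> rmax n f <= b.
Proof. induction n; intros H0 H; simpl; [lra|].
apply Rmax_lub; [apply IHn; auto; intros; apply H; lia| apply H; lia]. Qed.

Fixpoint rmin1 (n:nat) (h:nat->R) : R := match n with O => 1 | S m => Rmin (rmin1 m h) (h m) end.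
Lemma rmin1_pos n h : (forall k, (k<n)%nat -> 0 < h k) -> 0 < rmin1 n h.
Proof. induction n; simpl; intros H; [lra|].
apply Rmin_pos; [apply IHn; intros; apply H; lia| apply H; lia]. Qed.
Lemma rmin1_le n h k : (k<n)%nat -> rmin1 n h <= h k.
Proof. induction n; intros H; [lia|simpl]. destruct (Nat.eq_dec k n).
subst; apply Rmin_r. eapply Rle_trans; [apply Rmin_l| apply IHn; lia]. Qed.

Lemma gap_exists K (mu:nat->R) : (forall k1 k2, (k1<K)%nat -> (k2<K)%nat -> k1<>k2 -> mu k1 <> mu k2) ->
  exists d, 0 < d /\ forall k l, (k<K)%nat -> (l<K)%nat -> k<>l -> d <= Rabs (mu k - mu l).
Proof.
intros H. set (g := fun k => rmin1 K (fun l => if Nat.eq_dec k l then 1 else Rabs (mu k - mu l))).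
exists (rmin1 K g). split.
- apply rmin1_pos. intros k Hk. unfold g. apply rmin1_pos. intros l Hl.
  destruct (Nat.eq_dec k l); [lra|]. apply Rabs_pos_lt. intro E. apply (H k l Hk Hl n). lra.
- intros k l Hk Hl Hkl. eapply Rle_trans; [apply (rmin1_le _ _ k Hk)|]. unfold g.
  eapply Rle_trans; [apply (rmin1_le _ _ l Hl)|]. destruct (Nat.eq_dec k l); [contradiction|lra].
Qed.

Lemma column_bound K (p mu : nat -> R) d :
  0 < d -> (forall k l, (k<K)%nat -> (l<K)%nat -> k<>l -> d <= Rabs (mu k - mu l)) ->
  (forall k, (k<K)%nat -> 0 <= p k) ->
  (if Req_EM_T (rsum K p) 0 then 0 else rsum K p * (rsum K (fun k => p k * mu k) / rsum K p)^2)
  <= rsum K (fun k => p k * mu k ^ 2) - d^2/4 * (rsum K p - rmax K p).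
Proof.
intros Hd Hgap Hp.
assert (HM : 0 <= rmax K p) by apply rmax_ge0.
assert (HB : 0 <= rsum K (fun k => p k * mu k ^ 2)).
{ apply rsum_nonneg; intros; apply Rmult_le_pos; [auto| apply pow2_ge_0]. }
assert (Hs : 0 <= rsum K p) by (apply rsum_nonneg; auto).
assert (Hc : 0 <= d^2/4) by (assert (0 <= d^2) by apply pow2_ge_0; lra).
remember (rsum K p) as s eqn:Es.
remember (rsum K (fun k => p k * mu k)) as A eqn:EA.
remember (rsum K (fun k => p k * mu k ^ 2)) as B eqn:EB.
remember (rmax K p) as M eqn:EM.
destruct (Req_EM_T s 0) as [E|E].
- rewrite E. assert (0 <= d^2/4*M) by (apply Rmult_le_pos; lra). lra.
- set (m := A / s).
  assert (Hid : rsum K (fun k => p k * (mu k - m)^2) = B - s*m^2).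
  { transitivity (rsum K (fun k => p k * mu k^2) + rsum K (fun k => (-2*m) * (p k * mu k))
       + rsum K (fun k => m^2 * p k)).
    rewrite <- !rsum_plus. apply rsum_ext; intros; ring.
    rewrite !rsum_scal. rewrite <- EA, <- EB, <- Es. unfold m. field. auto. }
  assert (Hlow : d^2/4 * (s - M) <= rsum K (fun k => p k * (mu k - m)^2)).
  { destruct (classic (exists j, (j<K)%nat /\ Rabs (mu j - m) < d/2)) as [[j [Hj Hjm]] | Hno].
    - assert (Hpj : p j <= M) by (rewrite EM; apply rmax_ub; auto).
      apply Rle_trans with (rsum K (fun k => d^2/4 * (p k - (if Nat.eq_dec k j then p j else 0)))).
      + rewrite rsum_scal, rsum_minus, rsum_ind by auto. rewrite <- Es.
        apply Rmult_le_compat_l; lra.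
      + apply rsum_le; intros k Hk. destruct (Nat.eq_dec k j).
        * subst. replace (p j - p j) with 0 by ring. rewrite Rmult_0_r.
          apply Rmult_le_pos; [auto|apply pow2_ge_0].
        * assert (Habs: d/2 <= Rabs (mu k - m)).
          { pose proof (Rabs_triang (mu k - m) (m - mu j)) as T.
            replace (mu k - m + (m - mu j)) with (mu k - mu j) in T by ring.
            rewrite Rabs_minus_sym in Hjm. pose proof (Hgap k j Hk Hj n). lra. }
          assert (Hsq : d^2/4 <= (mu k - m)^2).
          { rewrite <- (pow2_abs (mu k - m)). nra. }
          pose proof (Hp k Hk). nra.
    - apply Rle_trans with (rsum K (fun k => d^2/4 * p k)).
      + rewrite rsum_scal, <- Es. apply Rmult_le_compat_l; lra.
      + apply rsum_le; intros k Hk.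
        assert (Habs: d/2 <= Rabs (mu k - m)).
        { apply Rnot_lt_le. intro Hl. apply Hno. exists k; auto. }
        assert (Hsq : d^2/4 <= (mu k - m)^2).
        { rewrite <- (pow2_abs (mu k - m)). nra. }
        pose proof (Hp k Hk). nra. }
  assert (s * (A / s) ^ 2 = s * m^2) by reflexivity. lra.
Qed.

Lemma Rsup_lub E : bound E -> (exists x, E x) -> is_lub E (Rsup E).
Proof. intros Hb Hne. unfold Rsup. apply epsilon_spec.
destruct (completeness E Hb Hne) as [m Hm]. exists m; exact Hm. Qed.

Lemma obj_bound K pi mu d e P :
  0 < d -> (forall k l, (k<K)%nat -> (l<K)%nat -> k<>l -> d <= Rabs (mu k - mu l)) ->
  rsum K pi = 1 -> feasible K pi e P ->
  objective K mu P <= rsum K (fun k => pi k * mu k ^ 2) - d^2/4 * e.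
Proof.
intros Hd Hgap Hsum [Hnn [Hrow Heps]].
assert (Hc : 0 <= d^2/4) by (assert (0 <= d^2) by apply pow2_ge_0; lra).
unfold objective. eapply Rle_trans.
{ apply rsum_le; intros k' Hk'. unfold mut, pit.
  apply (column_bound K (fun k => P k k') mu d); auto. }
cbv beta. rewrite rsum_minus, rsum_scal, rsum_minus.
assert (E1 : rsum K (fun k' => rsum K (fun k => P k k' * mu k ^ 2)) = rsum K (fun k => pi k * mu k ^ 2)).
{ transitivity (rsum K (fun k => rsum K (fun k' => P k k' * mu k^2))).
  symmetry. apply (rsum_swap K K (fun k k' => P k k' * mu k ^ 2)).
  apply rsum_ext; intros k Hk. rewrite rsum_scalr. rewrite Hrow by auto. reflexivity. }
assert (E2 : rsum K (fun k' => rsum K (fun k => P k k')) = 1).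
{ transitivity (rsum K (fun k => rsum K (fun k' => P k k'))).
  symmetry. apply (rsum_swap K K (fun k k' => P k k')).
  rewrite <- Hsum. apply rsum_ext; intros k Hk. auto. }
rewrite E1, E2.
assert (d^2/4 * e <= d^2/4 * (1 - rsum K (fun k' => rmax K (fun k => P k k')))).
{ apply Rmult_le_compat_l; lra. }
lra.
Qed.

Definition diagP (pi : nat -> R) (k k' : nat) : R := if Nat.eq_dec k k' then pi k else 0.
Definition unifP (K : nat) (pi : nat -> R) (k k' : nat) : R := pi k / INR K.

Lemma diag_feas K pi : (forall k, (k < K)%nat -> 0 < pi k) -> rsum K pi = 1 -> feasible K pi 0 (diagP pi).
Proof.
intros Hpos Hsum. unfold feasible, diagP. split; [|split].
- intros k k' Hk Hk'. destruct (Nat.eq_dec k k'); [apply Rlt_le; auto|lra].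
- intros k Hk. apply rsum_ind2; auto.
- assert (rsum K (fun k' => rmax K (fun k => if Nat.eq_dec k k' then pi k else 0)) <= rsum K pi).
  { apply rsum_le; intros k' Hk'. apply rmax_lub. apply Rlt_le; auto.
    intros k Hk. destruct (Nat.eq_dec k k'); [subst; lra|apply Rlt_le; auto]. }
  lra.
Qed.

Lemma diag_obj K pi mu : (forall k, (k < K)%nat -> 0 < pi k) ->
  objective K mu (diagP pi) = rsum K (fun k => pi k * mu k ^ 2).
Proof.
intros Hpos. unfold objective. apply rsum_ext; intros k' Hk'.
assert (Hp : pit K (diagP pi) k' = pi k').
{ unfold pit, diagP. rewrite <- (rsum_ind K k' (pi k')) by auto. apply rsum_ext; intros k Hk.
  destruct (Nat.eq_dec k k'); subst; auto. }
assert (Hn : rsum K (fun k => diagP pi k k' * mu k) = pi k' * mu k').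
{ unfold diagP. transitivity (rsum K (fun k => if Nat.eq_dec k k' then pi k' * mu k' else 0)).
  apply rsum_ext; intros k Hk. destruct (Nat.eq_dec k k'); subst; auto; ring.
  apply rsum_ind; auto. }
unfold mut. rewrite Hp, Hn. pose proof (Hpos k' Hk').
destruct (Req_EM_T (pi k') 0); [lra|]. field; lra.
Qed.

Lemma unif_feas K pi e : (0 < K)%nat -> (forall k, (k < K)%nat -> 0 < pi k) ->
  e <= 1 - rmax K pi -> feasible K pi e (unifP K pi).
Proof.
intros HK Hpos He. assert (HKr : 0 < INR K) by (apply lt_0_INR; lia).
unfold feasible, unifP. cbv beta. split; [|split].
- intros k k' Hk Hk'. apply Rlt_le. apply Rdiv_lt_0_compat; auto.
- intros k Hk. rewrite rsum_const. field. lra.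
- assert (rsum K (fun k' => rmax K (fun k => pi k / INR K)) <= rsum K (fun _ => rmax K pi / INR K)).
  { apply rsum_le; intros k' Hk'. apply rmax_lub.
    apply Rmult_le_pos; [apply rmax_ge0| apply Rlt_le, Rinv_0_lt_compat; auto].
    intros k Hk. apply Rmult_le_compat_r; [apply Rlt_le, Rinv_0_lt_compat; auto|].
    apply rmax_ub; auto. }
  rewrite (rsum_const K (rmax K pi / INR K)) in H. replace (INR K * (rmax K pi / INR K)) with (rmax K pi) in H by (field; lra).
  lra.
Qed.

Theorem lemma4 (K : nat) (pi mu : nat -> R)
  (HK : (2 <= K)%nat)
  (Hpos : forall k, (k < K)%nat -> 0 < pi k)
  (Hsum : rsum K pi = 1)
  (Hdist : forall k1 k2, (k1 < K)%nat -> (k2 < K)%nat -> k1 <> k2 -> mu k1 <> mu k2) :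
  (forall e1 e2, 0 <= e1 -> e1 <= e2 -> e2 <= 1 - rmax K pi ->
     fval K pi mu e2 <= fval K pi mu e1) /\
  fval K pi mu 0 = rsum K (fun k => pi k * mu k ^ 2) /\
  (forall e, 0 < e -> e <= 1 - rmax K pi -> fval K pi mu e < fval K pi mu 0).
Proof.
destruct (gap_exists K mu Hdist) as [d [Hd Hgap]].
set (S := rsum K (fun k => pi k * mu k ^ 2)).
set (E := fun e v => exists P, feasible K pi e P /\ v = objective K mu P).
assert (Hc : 0 < d^2/4) by (assert (0 < d^2) by (apply pow_lt; auto); lra).
assert (Hub : forall e, 0 <= e -> is_upper_bound (E e) (S - d^2/4 * e)).
{ intros e He v [P [HP ->]]. apply (obj_bound K pi mu d e P); auto. }
assert (Hlub : forall e, 0 <= e -> e <= 1 - rmax K pi -> is_lub (E e) (fval K pi mu e)).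
{ intros e He1 He2. apply Rsup_lub. exists (S - d^2/4*e). apply Hub; auto.
  exists (objective K mu (unifP K pi)). exists (unifP K pi). split; auto.
  apply unif_feas; auto. lia. }
assert (H0m : 0 <= 1 - rmax K pi).
{ assert (rmax K pi <= 1); [|lra]. apply rmax_lub; [lra|]. intros k Hk. rewrite <- Hsum.
  clear -Hk Hpos. induction K; [lia|]. simpl. destruct (Nat.eq_dec k K).
  - subst. assert (0 <= rsum K pi); [|lra]. apply rsum_nonneg. intros; apply Rlt_le, Hpos; lia.
  - assert (pi k <= rsum K pi) by (apply IHK; [intros; apply Hpos; lia|lia]).
    pose proof (Hpos K (Nat.lt_succ_diag_r K)). lra. }
assert (Hf0 : fval K pi mu 0 = S).
{ destruct (Hlub 0 (Rle_refl 0) H0m) as [U L]. apply Rle_antisym.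
  - apply L. replace S with (S - d^2/4*0) by ring. apply Hub; lra.
  - apply U. exists (diagP pi). split. apply diag_feas; auto. unfold S. rewrite diag_obj; auto. }
split; [|split; auto].
- intros e1 e2 H1 H12 H2. destruct (Hlub e2 ltac:(lra) H2) as [U2 L2].
  destruct (Hlub e1 H1 ltac:(lra)) as [U1 L1]. apply L2.
  intros v [P [HP ->]]. apply U1. exists P. split; auto.
  destruct HP as [a [b c]]. split; [|split]; auto. lra.
- intros e He1 He2. rewrite Hf0. destruct (Hlub e ltac:(lra) He2) as [U L].
  assert (fval K pi mu e <= S - d^2/4*e) by (apply L, Hub; lra).
  assert (0 < d^2/4*e) by (apply Rmult_lt_0_compat; lra). lra.
Qed.
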